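(* Let $0<m<L$, $\alpha>0$, $\rho\ge\rho_\mathrm{GD}:=\max(1-\alpha m,\ \alpha L-1)$ and $\gamma\in[0,\rho^2]$. Let $A=I$, $B=-\alpha I$, $C=I$ (all $n\times n$). Then there exists $\varepsilon\in[0,1]$ such that the matrix \[ \begin{bmatrix} A + \big((1-\varepsilon)m+\varepsilon L\big)BC & -\varepsilon\gamma B\\ (1-\varepsilon)(L-m)C & \varepsilon\gamma I\end{bmatrix} \] is $\rho$-Schur.
   Context: A square matrix is $\rho$-Schur if all its eigenvalues lie in the open disk of radius $\rho$. *)

(* Defs.v *)
From HB Require Import structures.
From mathcomp Require Import all_boot all_order all_algebra.
From mathcomp Require Import complex.
Set Implicit Arguments. Unset Strict Implicit. Unset Printing Implicit Defensive.
Import Order.TTheory GRing.Theory Num.Theory.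
Local Open Scope ring_scope.
Local Open Scope complex_scope.

Definition rho_Schur (R : rcfType) (k : nat) (M : 'M[R]_k) (rho : R) : Prop :=
  forall z : R[i], eigenvalue (map_mx (fun x : R => x%:C) M) z -> `|z| < rho%:C.

(* Main.v *)
Require Import Defs.
From HB Require Import structures.
From mathcomp Require Import all_boot all_order all_algebra.
From mathcomp Require Import complex ring lra.
Import Order.TTheory GRing.Theory Num.Theory.
Local Open Scope ring_scope.

Lemma block_eig (F : fieldType) n (a b c d z : F) :
  eigenvalue (block_mx a%:M b%:M c%:M d%:M : 'M_(n+n)) z ->
  z^+2 - (a+d)*z + (a*d - b*c) = 0.
Proof.
move/eigenvalueP => [v Hv nz].
move: Hv nz; rewrite -(hsubmxK v) mul_row_block !mul_mx_scalar scale_row_mx.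
set x := lsubmx v; set y := rsubmx v => Hv nz.
case/eq_row_mx: Hv => H1 H2.
have [j hj] : exists j, (x 0 j != 0) || (y 0 j != 0).
  apply/existsP; apply: contraR nz; rewrite negb_exists => /forallP H.
  have -> : x = 0 by apply/rowP => k; move: (H k); rewrite negb_or !negbK => /andP[/eqP -> _]; rewrite mxE.
  have -> : y = 0 by apply/rowP => k; move: (H k); rewrite negb_or !negbK => /andP[_ /eqP ->]; rewrite mxE.
  by rewrite row_mx0.
have e1 : (a *: x + c *: y) 0 j = (z *: x) 0 j by rewrite H1.
have e2 : (b *: x + d *: y) 0 j = (z *: y) 0 j by rewrite H2.
move: e1 e2 hj => /=; rewrite !mxE.
set u := v 0 (lshift n j); set w := v 0 (rshift n j) => e1 e2 hj.
have hu : (z^+2 - (a+d)*z + (a*d - b*c)) * u = 0.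
  have -> : (z^+2 - (a+d)*z + (a*d - b*c)) * u = (z-d)*(z*u - (a*u + c*w)) + c*(z*w - (b*u+d*w)) by ring.
  by rewrite e1 e2 !subrr !mulr0 addr0.
have hw : (z^+2 - (a+d)*z + (a*d - b*c)) * w = 0.
  have -> : (z^+2 - (a+d)*z + (a*d - b*c)) * w = (z-a)*(z*w - (b*u+d*w)) + b*(z*u - (a*u + c*w)) by ring.
  by rewrite e1 e2 !subrr !mulr0 addr0.
case/orP: hj => h.
  by move/eqP: hu; rewrite mulf_eq0 (negbTE h) orbF => /eqP.
by move/eqP: hw; rewrite mulf_eq0 (negbTE h) orbF => /eqP.
Qed.

Section K. Local Open Scope complex_scope.
Lemma key (R : rcfType) n (a11 a12 a21 a22 rho : R) :
  0 < rho -> a11*a22 - a12*a21 < rho^+2 ->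
  0 < rho^+2 - (a11+a22)*rho + (a11*a22 - a12*a21) ->
  0 < rho^+2 + (a11+a22)*rho + (a11*a22 - a12*a21) ->
  rho_Schur (block_mx a11%:M a12%:M a21%:M a22%:M : 'M_(n+n)) rho.
Proof.
move=> hr hD hp hm z.
set T := a11 + a22; set D := a11*a22 - a12*a21.
move: hD hp hm; rewrite -/T -/D => hD hp hm.
rewrite map_block_mx !map_scalar_mx => /block_eig.
have -> : (a11%:C + a22%:C)%C = T%:C by rewrite rmorphD.
have -> : (a11%:C * a22%:C - a12%:C * a21%:C)%C = D%:C by rewrite rmorphB !rmorphM.
case: z => x y; rewrite -!complexr0 expr2; simpc => /eqP; rewrite eq_complex /= => /andP[/eqP e1 /eqP e2].
simpc.
have hs : x^+2 + y^+2 < rho^+2.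
  have [y0|yn0] := eqVneq y 0.
    have hx : x * x - T * x + D = 0 by rewrite -e1 y0 mulr0 subr0.
    rewrite y0 !expr2 mul0r addr0.
    have hDx : D = T * x - x * x by lra.
    have hp' : 0 < (rho - x) * (rho - (T - x)).
      by have -> : (rho - x) * (rho - (T - x)) = rho^+2 - T*rho + D by rewrite hDx; ring.
    have hm' : 0 < (rho + x) * (rho + (T - x)).
      by have -> : (rho + x) * (rho + (T - x)) = rho^+2 + T*rho + D by rewrite hDx; ring.
    have h1 : x < rho.
      rewrite ltNge; apply/negP => hxr.
      have a1 : rho - x < 0.
        rewrite lt_neqAle subr_le0 hxr andbT; apply/eqP => E; move: hp'; rewrite E mul0r ltxx //.
      have a2 : rho - (T - x) < 0 by move: hp'; rewrite (nmulr_rgt0 _ a1).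
      nra.
    have h2 : - rho < x.
      rewrite ltNge; apply/negP => hxr.
      have a1 : rho + x < 0.
        have a0 : rho + x <= 0 by lra.
        rewrite lt_neqAle a0 andbT; apply/eqP => E; move: hm'; rewrite E mul0r ltxx //.
      have a2 : rho + (T - x) < 0 by move: hm'; rewrite (nmulr_rgt0 _ a1).
      nra.
    nra.
  have hT : 2 * x = T.
    have : (2 * x - T) * y = 0 by rewrite -e2; ring.
    move/eqP; rewrite mulf_eq0 (negbTE yn0) orbF subr_eq0 => /eqP //.
  nra.
rewrite -(ger0_norm (ltW hr)) -sqrtr_sqr ltr_sqrt //.
by rewrite exprn_gt0.
Qed.
End K.

Theorem lemma2p10 (R : rcfType) (n : nat) (m L alpha rho gamma : R) :
  0 < m -> m < L -> 0 < alpha ->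
  Num.max (1 - alpha * m) (alpha * L - 1) <= rho ->
  0 <= gamma -> gamma <= rho ^+ 2 ->
  let A : 'M[R]_n := 1%:M in
  let B : 'M[R]_n := - alpha *: 1%:M in
  let C : 'M[R]_n := 1%:M in
  exists eps : R, 0 <= eps /\ eps <= 1 /\
    rho_Schur
      (block_mx (A + ((1 - eps) * m + eps * L) *: (B *m C)) (- (eps * gamma) *: B)
                ((1 - eps) * (L - m) *: C)                  ((eps * gamma) *: 1%:M))
      rho.
Proof.
move=> hm hmL ha; rewrite ge_max => /andP[h1 h2] hg hg2 A B C.
have hr : 0 < rho.
  have : 0 < alpha * (L - m) by rewrite mulr_gt0 // subr_gt0.
  lra.
have E : forall e : R, block_mx (A + ((1 - e) * m + e * L) *: (B *m C)) (- (e * gamma) *: B)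
                ((1 - e) * (L - m) *: C)                  ((e * gamma) *: 1%:M)
   = block_mx (1 - ((1 - e) * m + e * L) * alpha)%:M (e * gamma * alpha)%:M
              ((1 - e) * (L - m))%:M (e * gamma)%:M.
  move=> e; rewrite /A /B /C mulmx1 !scale_scalar_mx -raddfD /= mulr1.
  by congr block_mx; congr scalar_mx; ring.
have [hgr|hgr] := ltP gamma rho.
  exists (1/2); split; first lra; split; first lra.
  have k0 : 0 < alpha * m by rewrite mulr_gt0.
  have k0' : alpha * m < alpha * L by rewrite ltr_pM2l.
  have k1 : 0 <= gamma * (rho - (1 - alpha * L)) by rewrite mulr_ge0 //; lra.
  have k2 : 0 <= rho * (rho - (1 - alpha * m)) by rewrite mulr_ge0 //; lra.
  have k3 : 0 < (rho - (1 - alpha * L)) * (rho - gamma) by rewrite mulr_gt0 //; lra.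
  have k4 : 0 < rho * (rho + (1 - alpha * m)) by rewrite mulr_gt0 //; lra.
  have k5 : 0 <= (rho + (1 - alpha * L)) * (rho + gamma) by rewrite mulr_ge0 //; lra.
  have k6 : gamma * rho < rho ^+ 2 by rewrite expr2 ltr_pM2r.
  rewrite E; apply: key.
  - exact: hr.
  - have -> : (1 - ((1 - 1 / 2) * m + 1 / 2 * L) * alpha) * (1 / 2 * gamma) -
     1 / 2 * gamma * alpha * ((1 - 1 / 2) * (L - m)) = gamma * (1 - alpha * L) / 2 by field.
    lra.
  - set a := (X in 0 < X).
    have -> : a = (rho * (rho - (1 - alpha * m)) + (rho - (1 - alpha * L)) * (rho - gamma)) / 2 by rewrite /a; field.
    lra.
  - set a := (X in 0 < X).
    have -> : a = (rho * (rho + (1 - alpha * m)) + (rho + (1 - alpha * L)) * (rho + gamma)) / 2 by rewrite /a; field.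
    lra.
exists 0; split; first lra; split; first lra.
have k0 : 0 < alpha * m by rewrite mulr_gt0.
have k0' : alpha * m < alpha * L by rewrite ltr_pM2l.
have r1 : 1 <= rho.
  have : rho <= rho ^+ 2 by apply: le_trans hg2.
  by rewrite expr2 -{1}(mulr1 rho) ler_pM2l.
have k4 : 0 < rho * (rho + (1 - alpha * m)) by rewrite mulr_gt0 //; lra.
have k2 : 0 < rho * (rho - (1 - alpha * m)) by rewrite mulr_gt0 //; lra.
rewrite E; apply: key.
- exact: hr.
- rewrite !(mul0r, mulr0, subr0); exact: exprn_gt0.
- set a := (X in 0 < X).
  by have -> : a = rho * (rho - (1 - alpha * m)) by rewrite /a; ring.
- set a := (X in 0 < X).
  by have -> : a = rho * (rho + (1 - alpha * m)) by rewrite /a; ring.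
Qed.
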